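(* Let $n\ge1$, $\theta\in\mathbb R$ and $\tilde g=[\tilde g_1^\top,\dots,\tilde g_n^\top]^\top\in\mathbb R^{3n}$. The following are equivalent: (a) $(\tilde g,\theta)$ is non-singular, i.e. the linear map $\mathcal F:\mathbb R^3\times\mathbb R^3\to\mathbb R^{3n}$, $\mathcal F(s,\tau)=A(\tilde g,\theta)[s^\top,\tau^\top]^\top$, is injective; (b) $\mathrm{rank}(A(\tilde g,\theta))=6$; (c) $\dim(\Pi(\tilde g,\theta))=6$; (d) each of the sets $\{\tilde p^x_{i,\theta}\}_{i=1}^n$, $\{\tilde p^y_{i,\theta}\}_{i=1}^n$, $\{\tilde\phi_i\}_{i=1}^n$ affinely spans $\mathbb R$.
   Context: $R(\theta)=\begin{bmatrix}\cos\theta&-\sin\theta\\ \sin\theta&\cos\theta\end{bmatrix}$, $\Theta=\begin{bmatrix}R(\theta)&0\\0&1\end{bmatrix}$. Each $\tilde g_i=[\tilde p_i^\top,\tilde\phi_i]^\top\in\mathbb R^3$, and $\tilde g_{i,\theta}:=\Theta^\top\tilde g_i=[\tilde p^x_{i,\theta},\tilde p^y_{i,\theta},\tilde\phi_i]^\top$. $A(\tilde g,\theta)\in\mathbb R^{3n\times6}$ is the matrix whose $i$-th block row is $[\Theta\,\mathrm{diag}(\tilde g_{i,\theta})\ \ I_3]$. The target state space is $\Pi(\tilde g,\theta)=\{g\in\mathbb R^{3n}: g_i=\tau+\Theta\,\mathrm{diag}(s)\,\Theta^\top\tilde g_i,\ i=1,\dots,n,\ s,\tau\in\mathbb R^3\}$,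 which equals the image of $A(\tilde g,\theta)$. A set $\{x_i\}$ of reals affinely spans $\mathbb R$ if $\{\sum a_ix_i:\sum a_i=1\}=\mathbb R$, equivalently it contains two distinct elements. *)

(* Defs.v *)
From HB Require Import structures.
From mathcomp Require Import all_boot all_order all_algebra.
From mathcomp Require Import reals trigo.
Set Implicit Arguments. Unset Strict Implicit. Unset Printing Implicit Defensive.
Import Order.TTheory GRing.Theory Num.Theory.
Local Open Scope ring_scope.

Section Defs.
Variable R : realType.

Definition Rot (th : R) : 'M[R]_2 :=
  \matrix_(i < 2, j < 2)
    (if (i == 0 :> nat) then (if (j == 0 :> nat) then cos th else - sin th)
     else (if (j == 0 :> nat) then sin th else cos th)).

Definition Theta (th : R) : 'M[R]_(2 + 1) := block_mx (Rot th) 0 0 1%:M.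

Definition i0 : 'I_3 := @Ordinal 3 0 isT.
Definition i1 : 'I_3 := @Ordinal 3 1 isT.
Definition i2 : 'I_3 := @Ordinal 3 2 isT.

Definition gtheta n (gt : 'I_n -> 'cV[R]_3) (th : R) (i : 'I_n) : 'cV[R]_3 :=
  (Theta th)^T *m gt i.

Definition Amat n (gt : 'I_n -> 'cV[R]_3) (th : R)
  : 'M[R]_(\sum_(i < n) 3, 3 + 3) :=
  \mxcol_(i < n) row_mx (Theta th *m diag_mx (gtheta gt th i)^T) (1%:M : 'M[R]_3).

Definition in_Pi n (gt : 'I_n -> 'cV[R]_3) (th : R)
  (g : 'cV[R]_(\sum_(i < n) 3)) : Prop :=
  exists s tau : 'cV[R]_3,
    g = \mxcol_(i < n) (tau + Theta th *m diag_mx s^T *m (Theta th)^T *m gt i).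

Definition dim_Pi_eq n (gt : 'I_n -> 'cV[R]_3) (th : R) (d : nat) : Prop :=
  exists V : {vspace 'cV[R]_(\sum_(i < n) 3)},
    (forall g, g \in V <-> in_Pi gt th g) /\ \dim V = d.

Definition affinely_spans n (x : 'I_n -> R) : Prop :=
  forall y : R, exists a : 'I_n -> R,
    \sum_(i < n) a i = 1 /\ \sum_(i < n) a i * x i = y.

Definition nonsingular n (gt : 'I_n -> 'cV[R]_3) (th : R) : Prop :=
  injective (fun st : 'cV[R]_3 * 'cV[R]_3 => Amat gt th *m col_mx st.1 st.2).

End Defs.

(* Main.v *)
Require Import Defs.
From HB Require Import structures.
From mathcomp Require Import all_boot all_order all_algebra.
From mathcomp Require Import reals trigo.
From mathcomp Require Import ring lra.
From Stdlib Require Import Classical_Prop.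
Import Order.TTheory GRing.Theory Num.Theory.
Local Open Scope ring_scope.

Section S.
Variable R : realType.

Lemma RotTK (th : R) : (Rot th)^T *m Rot th = 1%:M.
Proof.
have h := cos2Dsin2 th.
apply/matrixP => i j; rewrite !mxE !big_ord_recl big_ord0 !mxE /=.
case: i => [[|[|?]] ?] //=; case: j => [[|[|?]] ?] //=; rewrite ?mulr1n ?mulr0n; nra.
Qed.

Lemma ThetaTK (th : R) : (Theta th)^T *m Theta th = 1%:M.
Proof.
rewrite /Theta tr_block_mx !trmx0 trmx1 mulmx_block.
rewrite !mulmx0 !mul0mx !addr0 !add0r mulmx1 RotTK -scalar_mx_block //.
Qed.

Lemma ThetaKT (th : R) : Theta th *m (Theta th)^T = 1%:M.
Proof. exact: mulmx1C (ThetaTK th). Qed.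

Lemma gtheta2 n (gt : 'I_n -> 'cV[R]_3) th i : gtheta gt th i i2 0 = gt i i2 0.
Proof.
rewrite /gtheta /Theta tr_block_mx !trmx0 trmx1.
rewrite -[gt i](@vsubmxK _ 2 1) mul_block_col !mul0mx mul1mx addr0 add0r.
have -> : i2 = rshift 2 (0 : 'I_1) by apply: val_inj.
by rewrite !(@col_mxEd _ 2 1 1).
Qed.

Variables (n : nat) (gt : 'I_n -> 'cV[R]_3) (th : R).
Local Notation A := (Amat gt th).
Local Notation T := (Theta th).

Lemma Ablock (s tau : 'cV[R]_3) : A *m col_mx s tau =
  \mxcol_i (T *m diag_mx (gtheta gt th i)^T *m s + tau).
Proof.
rewrite /Amat mxcol_mul; apply: eq_mxcol => i.
by rewrite mul_row_col mul1mx.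
Qed.

Lemma diag_comm (u v : 'cV[R]_3) : diag_mx u^T *m v = diag_mx v^T *m u.
Proof.
by apply/matrixP => i j; rewrite !mul_diag_mx !mxE (ord1 j) mulrC.
Qed.

Lemma in_PiE g : in_Pi gt th g <-> exists s tau, g = A *m col_mx s tau.
Proof.
have E (s tau : 'cV[R]_3) : \mxcol_i (tau + T *m diag_mx s^T *m T^T *m gt i) = A *m col_mx s tau.
  rewrite Ablock; apply: eq_mxcol => i.
  by rewrite addrC -!mulmxA diag_comm.
split; case=> s [tau ->]; exists s, tau; by rewrite E.
Qed.

Lemma kerE (s tau : 'cV[R]_3) : A *m col_mx s tau = 0 <->
  (forall i k, gtheta gt th i k 0 * s k 0 + (T^T *m tau) k 0 = 0).
Proof.
rewrite Ablock -(@mxcol0 _ n (fun=> 3%N) 1); split.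
  move/eq_mxcolP => H i k; have := H i.
  move/(congr1 (mulmx T^T)); rewrite mulmx0 mulmxDr !mulmxA ThetaTK mul1mx.
  move/matrixP/(_ k 0); rewrite [RHS]mxE => Hk.
  rewrite -Hk [in RHS]mxE.
  by congr (_ + _); rewrite mul_diag_mx !mxE.
move=> H; apply/eq_mxcolP => i.
rewrite -[tau]mul1mx -(ThetaKT th) -!mulmxA -mulmxDr.
have -> : diag_mx (gtheta gt th i)^T *m s + T^T *m tau = 0.
  apply/matrixP => k j; rewrite (ord1 j) [RHS]mxE -(H i k) mxE.
  by congr (_ + _); rewrite mul_diag_mx !mxE.
by rewrite mulmx0.
Qed.

Definition Kprop := forall s tau : 'cV[R]_3, A *m col_mx s tau = 0 -> s = 0 /\ tau = 0.

Lemma K_iff (hn : (0 < n)%N) : Kprop <->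
  (forall k : 'I_3, exists j l, gtheta gt th j k 0 != gtheta gt th l k 0).
Proof.
split.
  move=> HK k; apply: Classical_Prop.NNPP => Hne.
  have e j l : gtheta gt th j k 0 = gtheta gt th l k 0.
    case: (eqVneq (gtheta gt th j k 0) (gtheta gt th l k 0)) => // h.
    by exfalso; apply: Hne; exists j, l.
  pose c := gtheta gt th (Ordinal hn) k 0.
  pose s : 'cV[R]_3 := delta_mx k 0.
  have := HK s (T *m (- c *: s)).
  case.
    apply/kerE => i k'; rewrite mulmxA ThetaTK mul1mx.
    have -> : (- c *: s) k' 0 = - c * s k' 0 by rewrite mxE.
    have hd a : (delta_mx k 0 : 'cV[R]_3) a 0 = (a == k)%:R by rewrite mxE eqxx andbT.
    rewrite /s hd.
    case: (eqVneq k' k) => [->|nk] /=; last by rewrite !mulr0 addr0.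
    by rewrite /c (e i (Ordinal hn)) !mulr1 addrC addNr.
  move/matrixP/(_ k 0); rewrite !mxE !eqxx /= => /eqP; by rewrite oner_eq0.
move=> Hd s tau /kerE H.
have hs k : s k 0 = 0 /\ (T^T *m tau) k 0 = 0.
  have [j [l /negbTE hjl]] := Hd k.
  have e : (gtheta gt th j k 0 - gtheta gt th l k 0) * s k 0 = 0.
    transitivity ((gtheta gt th j k 0 * s k 0 + (T^T *m tau) k 0) -
                  (gtheta gt th l k 0 * s k 0 + (T^T *m tau) k 0)); first by ring.
    by rewrite !H subrr.
  move: e => /eqP; rewrite mulf_eq0 subr_eq0 hjl /= => /eqP hs.
  by split => //; have := H j k; rewrite hs mulr0 add0r.
split; first by apply/matrixP => k j; rewrite (ord1 j) mxE; case: (hs k).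
have : T^T *m tau = 0 by apply/matrixP => k j; rewrite (ord1 j) [RHS]mxE; case: (hs k).
by move/(congr1 (mulmx T)); rewrite mulmx0 mulmxA ThetaKT mul1mx.
Qed.

Lemma sum_ind m (j : 'I_m) (f : 'I_m -> R) : \sum_i (i == j)%:R * f i = f j.
Proof.
rewrite (bigD1 j) //= eqxx mul1r big1 ?addr0 // => i /negbTE ->; by rewrite mul0r.
Qed.

Lemma aff_iff m (x : 'I_m -> R) (hm : (0 < m)%N) :
  affinely_spans x <-> exists j l, x j != x l.
Proof.
split.
  move=> H; apply: NNPP => Hne.
  have e j l : x j = x l.
    case: (eqVneq (x j) (x l)) => // h.
    by exfalso; apply: Hne; exists j, l.
  have [a [h1 h2]] := H (x (Ordinal hm) + 1).
  have : \sum_(i < m) a i * x i = x (Ordinal hm).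
    rewrite (eq_bigr (fun i => a i * x (Ordinal hm))) => [|i _].
      by rewrite -mulr_suml h1 mul1r.
    by rewrite (e i (Ordinal hm)).
  rewrite h2 => h; lra.
move=> [j [l hjl]] y.
pose al := (y - x l) / (x j - x l).
exists (fun i => al * (i == j)%:R + (1 - al) * (i == l)%:R); split.
  rewrite big_split /= -!big_distrr /=.
  have si (k : 'I_m) : \sum_(i < m) (i == k)%:R = 1 :> R.
    by rewrite -[RHS](@sum_ind m k (fun=> 1)); apply: eq_bigr => i _; rewrite mulr1.
  rewrite !si; ring.
rewrite (eq_bigr (fun i => al * ((i==j)%:R * x i) + (1-al) * ((i==l)%:R * x i))) => [|i _];
  last by ring.
rewrite big_split /= -!big_distrr /= !sum_ind.
have ha : al * (x j - x l) = y - x l by rewrite /al divfK // subr_eq0.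
transitivity (al * (x j - x l) + x l); first by ring.
by rewrite ha subrK.
Qed.

Definition K0 := forall u : 'cV[R]_(3 + 3), A *m u = 0 -> u = 0.

Lemma K_K0 : Kprop <-> K0.
Proof.
split.
  move=> HK u Hu; rewrite -[u]vsubmxK in Hu *; have [-> ->] := HK _ _ Hu; exact: col_mx0.
move=> H s tau /H; rewrite -col_mx0 => /eq_col_mx [-> ->]; by [].
Qed.

Lemma inj_K0 : injective (mulmx A : 'cV[R]_(3 + 3) -> _) <-> K0.
Proof.
split.
  by move=> Hinj u Hu; apply: Hinj; rewrite Hu mulmx0.
move=> H u v e; have : A *m (u - v) = 0 by rewrite mulmxBr e subrr.
by move/H/eqP; rewrite subr_eq0 => /eqP.
Qed.

Lemma ns_K0 : nonsingular gt th <-> K0.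
Proof.
split.
  move=> Hinj u Hu.
  have : (usubmx u, dsubmx u) = (0, 0).
    by apply: Hinj => /=; rewrite vsubmxK Hu col_mx0 mulmx0.
  by case => h1 h2; rewrite -[u]vsubmxK h1 h2 col_mx0.
move=> H [p1 p2] [q1 q2] /= e.
have : A *m (col_mx p1 p2 - col_mx q1 q2) = 0 by rewrite mulmxBr e subrr.
by move/H/eqP; rewrite subr_eq0 => /eqP/eq_col_mx [-> ->].
Qed.

Lemma rank_K0 : \rank A = 6%N <-> K0.
Proof.
split.
  move=> hr u Hu.
  have rf : row_free A^T by rewrite /row_free mxrank_tr hr.
  have : u^T *m A^T == 0 by rewrite -trmx_mul Hu trmx0.
  by rewrite mulmx_free_eq0 // => /eqP h; rewrite -[u]trmxK h trmx0.
move=> H.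
have : row_free A^T.
  apply: inj_row_free => v Hv; rewrite -[v]trmxK (H v^T) ?trmx0 //.
  by have := congr1 trmx Hv; rewrite trmx_mul trmxK trmx0.
by rewrite /row_free mxrank_tr => /eqP.
Qed.

Let f := linfun (mulmx A : 'cV[R]_(3 + 3) -> _).

Lemma memPi g : (g \in limg f) <-> in_Pi gt th g.
Proof.
rewrite in_PiE; split.
  case/memv_imgP => u _ ->; rewrite lfunE /=.
  by exists (usubmx u), (dsubmx u); rewrite vsubmxK.
case=> s [tau ->]; apply/memv_imgP; exists (col_mx s tau); first exact: memvf.
by rewrite lfunE.
Qed.

Lemma dim_K0 : \dim (limg f) = 6%N <-> K0.
Proof.
have := limg_ker_dim f fullv; rewrite capfv dimvf dim_matrix /= => hd.
rewrite -inj_K0.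
have fE u : f u = A *m u by rewrite lfunE.
have finj : injective f <-> injective (mulmx A : 'cV[R]_(3 + 3) -> _).
  by split => h u v; [move=> e; apply: h; rewrite !fE e | rewrite !fE; apply: h].
rewrite -finj; split.
  move=> h6; apply/lker0P; rewrite -dimv_eq0; apply/eqP.
  by move: hd; rewrite h6 => /eqP; rewrite -[X in _ == X]add0n eqn_add2r => /eqP.
move/lker0P; rewrite -dimv_eq0 => /eqP h0.
by move: hd; rewrite h0 add0n.
Qed.

Lemma dimPi_K0 : dim_Pi_eq gt th 6 <-> K0.
Proof.
split.
  case=> V [HV dV].
  have eV : V = limg f.
    apply/vspaceP => g; apply/idP/idP => h; [apply/memPi/HV/h | apply/HV/memPi/h].
  by apply/dim_K0; rewrite -eV.
move/dim_K0 => h; exists (limg f); split => // g; exact: memPi.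
Qed.

Lemma d_K (hn : (0 < n)%N) :
  [/\ affinely_spans (fun i => gtheta gt th i i0 0),
      affinely_spans (fun i => gtheta gt th i i1 0)
    & affinely_spans (fun i => gt i i2 0)] <-> Kprop.
Proof.
rewrite K_iff //; split.
  case=> /(aff_iff _ _ hn) h0 /(aff_iff _ _ hn) h1 /(aff_iff _ _ hn) h2 k.
  have : k = i0 \/ k = i1 \/ k = i2.
    case: k => [[|[|[|?]]] ?]; [left|right;left|right;right|]; try by apply: val_inj.
    by [].
  case=> [->|[->|->]] //.
  by have [j [l h]] := h2; exists j, l; rewrite !gtheta2.
move=> H; split; apply/(aff_iff _ _ hn); [exact: H i0 | exact: H i1 |].
by have [j [l h]] := H i2; exists j, l; rewrite -!(@gtheta2 n gt th).
Qed.
End S.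

Theorem lemma3 (R : realType) (n : nat) (hn : (1 <= n)%N) (th : R)
  (gt : 'I_n -> 'cV[R]_3) :
  [<-> nonsingular gt th;
       \rank (Amat gt th) = 6%N;
       dim_Pi_eq gt th 6;
       [/\ affinely_spans (fun i => gtheta gt th i i0 0),
           affinely_spans (fun i => gtheta gt th i i1 0)
         & affinely_spans (fun i => gt i i2 0)]].
Proof.
tfae.
- by move/ns_K0/rank_K0.
- by move/rank_K0/dimPi_K0.
- by move/dimPi_K0/K_K0/(d_K _ _ _ _ hn).
- by move/(d_K _ _ _ _ hn)/K_K0/ns_K0.
Qed.
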